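(* For integers $0\le k\le n$, the Bernoulli numbers satisfy \[ \sum_{j=0}^{n-k}\binom{n-k}{j}B_{j+k}=\begin{cases} \sum_{j=0}^{k}\binom{k}{j}(-1)^{j}B_{n-j} & \text{if } 0\le k\le n-2,\ n\ge2,\\[2pt] \sum_{j=0}^{k}\binom{k}{j}(-1)^{j}B_{n-j}+(-1)^{n-1} & \text{if } k=n-1,\ n\ge1,\\[2pt] \sum_{j=0}^{k}\binom{k}{j}(-1)^{j}B_{n-j}+n(-1)^{n-1} & \text{if } k=n,\ n\ge0. \end{cases} \]
   Context: The Bernoulli numbers $B_n$ are defined by $\sum_{n\ge0}B_n\frac{t^n}{n!}=\frac{t}{e^t-1}$ (so $B_1=-\frac12$). *)

(* Defs.v *)
From HB Require Import structures.
From mathcomp Require Import all_boot all_order all_algebra.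
Set Implicit Arguments. Unset Strict Implicit. Unset Printing Implicit Defensive.
Import Order.TTheory GRing.Theory Num.Theory.
Local Open Scope ring_scope.

(* bern_list n = [:: B_0; ...; B_(n-1)], computed by the recurrence
   B_0 = 1,  B_m = - 1/(m+1) * \sum_(j < m) 'C(m+1, j) B_j   (m >= 1),
   which is equivalent to the generating function t/(e^t - 1) (so B_1 = -1/2). *)
Fixpoint bern_list (n : nat) : seq rat :=
  match n with
  | 0 => [::]
  | m.+1 =>
      let s := bern_list m in
      rcons s (if m == 0%N then 1
               else - (m.+1%:R)^-1 * \sum_(j < m) ('C(m.+1, j))%:R * nth 0 s j)
  end.

Definition bernoulli (n : nat) : rat := nth 0 (bern_list n.+1) n.

(* Main.v *)
Require Import Defs.
From HB Require Import structures.
From mathcomp Require Import all_boot all_order all_algebra.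
From mathcomp Require Import ring zify.
Import Order.TTheory GRing.Theory Num.Theory.
Local Open Scope ring_scope.

Lemma size_bern n : size (bern_list n) = n.
Proof. by elim: n => //= n IH; rewrite size_rcons IH. Qed.

Lemma nth_bern n i : (i < n)%N -> nth 0 (bern_list n) i = bernoulli i.
Proof.
elim: n => // n IH; rewrite ltnS leq_eqVlt => /orP[/eqP->|lt].
  by [].
rewrite /= nth_rcons size_bern lt IH //.
Qed.

Lemma bern_rec p : \sum_(j < p.+2) ('C(p.+2, j))%:R * bernoulli j = 0.
Proof.
rewrite big_ord_recr /=.
have -> : bernoulli p.+1 = - (p.+2%:R)^-1 *
   \sum_(j < p.+1) ('C(p.+2, j))%:R * bernoulli j.
  rewrite {1}/bernoulli.
  change (bern_list p.+2) with (rcons (bern_list p.+1) (if p.+1 == 0%N then 1 else - (p.+2%:R)^-1 * \sum_(j < p.+1) ('C(p.+2, j))%:R * nth 0 (bern_list p.+1) j)).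
  rewrite nth_rcons size_bern ltnn eqxx.
  congr (_ * _); apply: eq_bigr => j _; rewrite nth_bern //.
rewrite binSn mulrA mulrN mulfV ?pnatr_eq0 //. by rewrite mulN1r addrN.
Qed.

Lemma bern_sum m : \sum_(j < m.+1) ('C(m, j))%:R * bernoulli (j + 0)
   = bernoulli m + (if m == 1%N then 1 else 0).
Proof.
case: m => [|[|p]].
- by rewrite big_ord1 /= mul1r addr0.
- rewrite big_ord_recr big_ord1 /= !mul1r addrC; congr (_ + _).
- rewrite big_ord_recr /=.
  under eq_bigr => j _ do rewrite addn0.
  by rewrite bern_rec binn mul1r add0r addr0 addn0.
Qed.

Definition Lm m k := \sum_(j < m.+1) ('C(m, j))%:R * bernoulli (j + k).
Definition Rn k n := \sum_(j < k.+1) ('C(k, j))%:R * (-1) ^+ j * bernoulli (n - j).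

Lemma Lm_S m k : Lm m.+1 k = Lm m k.+1 + Lm m k.
Proof.
rewrite /Lm big_ord_recl /=.
under eq_bigr => j _ do rewrite /bump /= add1n binS natrD mulrDl.
rewrite big_split /=.
have -> : \sum_(i < m.+1) 'C(m, i)%:R * bernoulli (i.+1 + k)
   = \sum_(j < m.+1) 'C(m, j)%:R * bernoulli (j + k.+1).
  by apply: eq_bigr => j _; rewrite addSn addnS.
have -> : \sum_(i < m.+1) 'C(m, i.+1)%:R * bernoulli (i.+1 + k)
   = \sum_(i < m) 'C(m, i.+1)%:R * bernoulli (i.+1 + k).
  by rewrite big_ord_recr /= bin_small // mul0r addr0.
have -> : \sum_(j < m.+1) 'C(m, j)%:R * bernoulli (j + k)
   = 'C(m, 0)%:R * bernoulli (0 + k) + \sum_(i < m) 'C(m, i.+1)%:R * bernoulli (i.+1 + k).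
  by rewrite big_ord_recl.
rewrite !bin0; set A := \sum_(i < m) _; set B := \sum_(j < m.+1) _; ring.
Qed.

Lemma Rn_S k n : Rn k.+1 n.+1 = Rn k n.+1 - Rn k n.
Proof.
set S := \sum_(i < k) ('C(k, i.+1))%:R * (-1) ^+ i.+1 * bernoulli (n - i).
have h1 : Rn k n.+1 = bernoulli n.+1 + S.
  rewrite /Rn big_ord_recl (_ : nat_of_ord (@ord0 k) = 0%N) // expr0 mulr1 bin0 mul1r subn0; congr (_ + _).
have h2 : Rn k.+1 n.+1 = bernoulli n.+1 + (S - Rn k n).
  rewrite /Rn big_ord_recl (_ : nat_of_ord (@ord0 k.+1) = 0%N) // expr0 mulr1 bin0 mul1r subn0; congr (_ + _).
  under eq_bigr => i _ do rewrite /bump /= ?add1n ?subSS binS natrD !mulrDl.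
  rewrite big_split /=; congr (_ + _).
    rewrite big_ord_recr /= bin_small // !mul0r addr0.
    by [].
  rewrite -sumrN; apply: eq_bigr => i _; rewrite /bump /= ?add1n exprS; ring.
by rewrite h1 h2; ring.
Qed.

Definition cc m k : rat := if m == 0%N then k%:R * (-1) ^+ k.-1
  else if m == 1%N then (-1) ^+ k else 0.

Lemma D_eq k m : Lm m k - Rn k (m + k) = cc m k.
Proof.
elim: k m => [|k IH] m.
  rewrite /Lm bern_sum /Rn big_ord1 /= mulr1 mul1r subn0 addn0 /cc.
  by case: m => [|[|p]] /=; rewrite ?mul0r; ring.
rewrite addnS Rn_S.
have -> : Lm m k.+1 = Lm m.+1 k - Lm m k by rewrite Lm_S addrK.
have := IH m.+1; have := IH m; rewrite addSn.
move=> h1 h2.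
have -> : Lm m.+1 k - Lm m k - (Rn k (m + k).+1 - Rn k (m + k))
   = (Lm m.+1 k - Rn k (m + k).+1) - (Lm m k - Rn k (m + k)) by ring.
rewrite h1 h2 /cc; clear h1 h2 IH.
case: m => [|[|p]] //=.
- case: k => [|k] /=; first by rewrite mul0r; ring.
  rewrite exprS; rewrite -[(k.+2)%:R]natr1 -[(k.+1)%:R]natr1; ring.
- by rewrite exprS; ring.
Qed.

Theorem mainTheorem3 (n k : nat) (hkn : (k <= n)%N) :
  \sum_(j < (n - k).+1) ('C(n - k, j))%:R * bernoulli (j + k) =
  \sum_(j < k.+1) ('C(k, j))%:R * (-1) ^+ j * bernoulli (n - j)
  + (if k == n then n%:R * (-1) ^+ n.-1
     else if k.+1 == n then (-1) ^+ n.-1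
     else 0).
Proof.
have := D_eq k (n - k); rewrite subnK // /Lm /Rn => h.
apply/eqP; rewrite addrC -subr_eq h; apply/eqP.
rewrite /cc; case E: (n - k)%N => [|[|p]] /=.
- have -> : n = k by apply/eqP; rewrite eqn_leq hkn /= -subn_eq0 E.
  by rewrite eqxx.
- have -> : n = k.+1 by rewrite -(subnK hkn) E.
  have -> : (k == k.+1) = false by lia.
  by rewrite eqxx.
- have -> : n = (p.+2 + k)%N by rewrite -(subnK hkn) E.
  have -> : (k == (p.+2 + k)%N) = false by lia.
  by have -> : (k.+1 == (p.+2 + k)%N) = false by lia.
Qed.
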